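(* Let $(X,d)$ be a uniformly locally finite metric space and let $h,k\colon X\to\mathbb{R}$ be arbitrary maps. Regard $h$ and $k$ as (possibly unbounded) self-adjoint multiplication operators on $\ell_2(X)$ and let $\sigma_h,\sigma_k$ be the pre-flows on $\mathrm{C}^*_u(X)$ given by $\sigma_{h,t}(a)=e^{ith}ae^{-ith}$ and $\sigma_{k,t}(a)=e^{itk}ae^{-itk}$. The following are equivalent: (1) $h$ and $k$ are close, i.e. $\sup_{x\in X}|h_x-k_x|<\infty$; (2) the pre-flows $\sigma_h$ and $\sigma_k$ are inner perturbations of each other; (3) the pre-flows $\sigma_h$ and $\sigma_k$ are cocycle perturbations of each other.
   Context: A metric space is uniformly locally finite if $\sup_x|B_r(x)|<\infty$ for each $r>0$. A partial translation is a bijection $f\colon\mathrm{dom}(f)\subseteq X\to\mathrm{ran}(f)\subseteq X$ with $\sup_{x\in\mathrm{dom}(f)}d(x,f(x))<\infty$; $v_f\delta_x=\delta_{f(x)}$ for $x\in\mathrm{dom}(f)$, $v_f\delta_x=0$ otherwise; $\mathrm{C}^*_u(X)$ is the $\mathrm{C}^*$-subalgebra of $\mathcal{B}(\ell_2(X))$ generated by all $v_f$. The multiplication operator of $h$ has domain $\{\xi:\sum_x|h_x\xi_x|^2<\infty\}$ and acts by $(h\xi)_x=h_x\xi_x$. A pre-flow on a unital $\mathrm{C}^*$-algebra $A$ is a group homomorphism $\sigma\colon\mathbb{R}\to\mathrm{Aut}(A)$. A cocycle for $\sigma$ is a norm-continuous family of unitaries $(u_t)_{t\in\mathbb{R}}$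 in $A$ with $u_{t+s}=u_t\sigma_t(u_s)$ for all $t,s$; then $\rho_t(a)=u_t\sigma_t(a)u_t^*$ defines a cocycle perturbation $\rho$ of $\sigma$; if moreover such a cocycle can be chosen differentiable at $0$, $\rho$ is an inner perturbation of $\sigma$. *)

(* Defs.v *)
From HB Require Import structures.
From mathcomp Require Import all_boot all_order all_algebra.
From mathcomp Require Import all_classical all_reals all_analysis.
From mathcomp Require Import complex.
Set Implicit Arguments. Unset Strict Implicit. Unset Printing Implicit Defensive.
Import Order.TTheory GRing.Theory Num.Theory.
Local Open Scope ring_scope.
Local Open Scope classical_set_scope.

Section Defs.
Variables (R : realType) (X : choiceType).
Local Notation C := (R[i]).

Definition is_metric (d : X -> X -> R) : Prop :=
  [/\ forall x y, 0 <= d x y,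
      forall x y, d x y = 0 <-> x = y,
      forall x y, d x y = d y x &
      forall x y z, d x z <= d x y + d y z].

Definition unif_loc_finite (d : X -> X -> R) : Prop :=
  forall r : R, 0 < r -> exists N : nat, forall (x : X) (s : seq X),
    uniq s -> (forall y, y \in s -> d x y <= r) -> (size s <= N)%N.

Definition sqmod (z : C) : R := (complex.Re z) ^+ 2 + (complex.Im z) ^+ 2.

Definition vec := X -> C.

Definition in_l2 (xi : vec) : Prop :=
  exists M : R, forall s : seq X, uniq s -> \sum_(x <- s) sqmod (xi x) <= M.

Definition l2nsq (xi : vec) : R :=
  sup [set r : R | exists s : seq X, uniq s /\ r = \sum_(x <- s) sqmod (xi x)].

(* operators: maps on vectors, only their restriction to l2 matters *)
Definition op := vec -> vec.

Definition opeq (T S : op) : Prop := forall xi, in_l2 xi -> T xi = S xi.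

(* ||T - S|| <= e  (as operators on l2(X), including that T - S maps l2 to l2) *)
Definition opdist_le (T S : op) (e : R) : Prop :=
  forall xi, in_l2 xi ->
    in_l2 (fun x => T xi x - S xi x) /\
    l2nsq (fun x => T xi x - S xi x) <= e ^+ 2 * l2nsq xi.

Definition opzero : op := fun _ _ => 0.

Definition bounded_op (T : op) : Prop := exists c : R, opdist_le T opzero c.

(* a partial bijection is encoded by f : X -> option X (f x = None iff x is
   not in the domain), injective on its domain, with bounded displacement *)
Definition partial_translation (d : X -> X -> R) (f : X -> option X) : Prop :=
  (forall x1 x2 y, f x1 = Some y -> f x2 = Some y -> x1 = x2) /\
  exists c : R, forall x y, f x = Some y -> d x y <= c.

(* v_f delta_x = delta_{f x} for x in dom f, 0 otherwise *)
Definition vop (f : X -> option X) : op := fun xi y =>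
  match pselect (exists x, f x = Some y) with
  | left e => xi (projT1 (cid e))
  | right _ => 0
  end.

Definition comb (s : seq (C * (X -> option X))) : op :=
  fun xi y => \sum_(p <- s) p.1 * vop p.2 xi y.

(* C*_u(X): the norm closure of the *-algebra generated by the v_f, which is
   the linear span of the v_f (v_f^* = v_{f^-1}, v_f v_g = v_{f o g}) *)
Definition in_CuX (d : X -> X -> R) (T : op) : Prop :=
  forall e : R, 0 < e -> exists s : seq (C * (X -> option X)),
    (forall i, (i < size s)%N ->
       partial_translation d (nth (0, fun _ => None) s i).2) /\
    opdist_le T (comb s) e.

Definition unitary_op (u : op) : Prop :=
  (forall xi, in_l2 xi -> in_l2 (u xi) /\ l2nsq (u xi) = l2nsq xi) /\
  (forall eta, in_l2 eta -> exists xi, in_l2 xi /\ u xi = eta) /\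
  (forall (a b : C) xi eta, in_l2 xi -> in_l2 eta ->
     u (fun x => a * xi x + b * eta x) = (fun x => a * u xi x + b * u eta x)).

Definition expi (th : R) : C := (cos th +i* sin th)%C.

Definition phase (h : X -> R) (t : R) : op := fun xi x => expi (t * h x) * xi x.

Definition preflow (h : X -> R) (t : R) (a : op) : op :=
  fun xi => phase h t (a (phase h (- t) xi)).

Definition norm_continuous (u : R -> op) : Prop :=
  forall t e, 0 < e -> exists2 delta : R, 0 < delta &
    forall s, `|s - t| < delta -> opdist_le (u s) (u t) e.

Definition differentiable_at0 (u : R -> op) : Prop :=
  exists2 D : op, bounded_op D &
    forall e, 0 < e -> exists2 delta : R, 0 < delta &
      forall t, t != 0 -> `|t| < delta ->
        opdist_le (fun xi x => (t^-1)%:C%C * (u t xi x - u 0 xi x)) D e.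

Definition is_cocycle (d : X -> X -> R) (sigma : R -> op -> op) (u : R -> op)
  : Prop :=
  [/\ forall t, in_CuX d (u t) /\ unitary_op (u t),
      norm_continuous u &
      forall t s, opeq (u (t + s)) (fun xi => u t (sigma t (u s) xi))].

(* rho_t(a) = u_t sigma_t(a) u_t^*  on C*_u(X), written as
   rho_t(a) u_t = u_t sigma_t(a)  (u_t unitary, so u_t^* = u_t^-1) *)
Definition perturbed_by (d : X -> X -> R) (sigma rho : R -> op -> op)
  (u : R -> op) : Prop :=
  forall t a, in_CuX d a -> opeq (fun xi => rho t a (u t xi))
                                 (fun xi => u t (sigma t a xi)).

Definition cocycle_perturbation (d : X -> X -> R) (sigma rho : R -> op -> op)
  : Prop :=
  exists u, is_cocycle d sigma u /\ perturbed_by d sigma rho u.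

Definition inner_perturbation (d : X -> X -> R) (sigma rho : R -> op -> op)
  : Prop :=
  exists u, [/\ is_cocycle d sigma u, differentiable_at0 u &
                perturbed_by d sigma rho u].

Definition close_maps (h k : X -> R) : Prop :=
  exists M : R, forall x, `|h x - k x| <= M.

End Defs.

(* Main.v *)
Require Import Defs.
From HB Require Import structures.
From mathcomp Require Import all_boot all_order all_algebra.
From mathcomp Require Import all_classical all_reals all_analysis.
From mathcomp Require Import complex.
From mathcomp Require Import ring lra zify.
Import Order.TTheory GRing.Theory Num.Theory.
Import numFieldNormedType.Exports.
Local Open Scope ring_scope.
Set Implicit Arguments. Unset Strict Implicit. Unset Printing Implicit Defensive.
Section S.
Variable R : realType.
Variable X : choiceType.
Local Notation C := R[i].
Lemma nonneg_deriv (f df : R -> R) :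
  (forall x : R, is_derive x (1:R) f (df x)) -> f 0 = 0 ->
  (forall x, 0 < x -> 0 <= df x) -> forall x, 0 <= x -> 0 <= f x.
Proof.
move=> fd f0 dpos x; rewrite le_eqVlt => /orP[/eqP<-|x0]; first by rewrite f0.
have cf : continuous (f : R -> R).
  move=> y; apply: differentiable_continuous; apply/derivable1_diffP; apply: ex_derive; apply: fd.
have [c] := @MVT R f df 0 x x0 (fun y _ => fd y) (continuous_subspaceT cf).
rewrite in_itv /= => /andP[c0 _] E.
have : 0 <= f x - f 0 by rewrite E; apply: mulr_ge0; [apply: dpos | lra].
by rewrite f0 subr0.
Qed.

Lemma sin_le_id (x : R) : 0 <= x -> sin x <= x.
Proof.
move=> x0; rewrite -subr_ge0.
apply: (@nonneg_deriv (fun y : R => y - sin y) (fun y : R => 1 - cos y)) => //.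
- by rewrite sin0 subr0.
Qed.

Lemma cos_quad (x : R) : 0 <= x -> 1 - cos x <= x ^+ 2 / 2.
Proof.
move=> x0; rewrite -subr_ge0.
apply: (@nonneg_deriv (fun y : R => y ^+ 2 / 2 - (1 - cos y)) (fun y : R => y - sin y)) => //.
- move=> y. apply: is_derive_eq. rewrite !scaler0 add0r. rewrite /GRing.scale /=. lra.
- move=> /=. rewrite cos0 expr0n /=. lra.
- by move=> y y0; rewrite subr_ge0 sin_le_id // ltW.
Qed.

Lemma cos_lin (x : R) : 0 <= x -> 1 - cos x <= x.
Proof.
move=> x0; have [x2|x2] := lerP x 2.
  have := @cos_quad x x0; nra.
have := cos_geN1 x; lra.
Qed.

Lemma sin_quad (x : R) : 0 <= x -> x - sin x <= x ^+ 2 / 2.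
Proof.
move=> x0; rewrite -subr_ge0.
apply: (@nonneg_deriv (fun y : R => y ^+ 2 / 2 - (y - sin y)) (fun y : R => y - (1 - cos y))) => //.
- move=> y. apply: is_derive_eq. rewrite !scaler0 add0r. rewrite /GRing.scale /=. lra.
- move=> /=. rewrite sin0 expr0n /=. lra.
- by move=> y y0; rewrite subr_ge0 cos_lin // ltW.
Qed.

Lemma cos_bound (x : R) : 0 <= 1 - cos x <= x ^+ 2 / 2.
Proof.
have h1 := cos_le1 x; apply/andP; split; first lra.
have [x0|x0] := lerP 0 x; first exact: (@cos_quad x).
rewrite -cosN -sqrrN; apply: (@cos_quad (-x)); lra.
Qed.

Lemma sin_bound (x : R) : `|x - sin x| <= x ^+ 2 / 2.
Proof.
have [x0|x0] := lerP 0 x.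
  rewrite ger0_norm; first exact: (@sin_quad x).
  by rewrite subr_ge0 (@sin_le_id x).
have h1 : 0 <= - x by lra.
rewrite ler0_norm; last by have := @sin_le_id (-x) h1; rewrite sinN; lra.
have := @sin_quad (-x) h1; rewrite sinN sqrrN; lra.
Qed.


Lemma sqmod_ge0 (a : C) : 0 <= sqmod a.
Proof. rewrite /sqmod; nra. Qed.

Definition sumsq (xi : vec R X) (s : seq X) := \sum_(x <- s) sqmod (xi x).

Lemma sumsq_ge0 xi s : 0 <= sumsq xi s.
Proof. by rewrite /sumsq; elim: s => [|a s IH]; rewrite ?big_nil ?big_cons // addr_ge0 // sqmod_ge0. Qed.

Lemma l2nsq_ub (xi : vec R X) s : in_l2 xi -> uniq s -> sumsq xi s <= l2nsq xi.
Proof.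
move=> [M hM] us; rewrite /l2nsq.
apply: sup_upper_bound; last by exists s.
split; first by exists 0, [::]; rewrite big_nil.
by exists M => r [s' [us' ->]]; apply: hM.
Qed.

Lemma l2nsq_le (xi : vec R X) M : (forall s, uniq s -> sumsq xi s <= M) -> l2nsq xi <= M.
Proof.
move=> hM; rewrite /l2nsq; apply: ge_sup; first by exists 0, [::]; rewrite big_nil.
by move=> r [s' [us' ->]]; apply: hM.
Qed.

Lemma l2nsq_ge0 (xi : vec R X) : in_l2 xi -> 0 <= l2nsq xi.
Proof. move=> h; apply: le_trans (@l2nsq_ub xi [::] h isT); exact: sumsq_ge0. Qed.

Lemma supp_sum (v : vec R X) y s : (forall w, w != y -> v w = 0) -> uniq s ->
  sumsq v s = if y \in s then sqmod (v y) else 0.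
Proof.
move=> hv; rewrite /sumsq; elim: s => [|a s IH] /=; first by rewrite big_nil.
move=> /andP[an us]; rewrite big_cons IH // in_cons.
have [ay|ay] := eqVneq a y.
  by subst a; rewrite (negbTE an) addr0.
rewrite /= hv // /sqmod /=.
by case: (y \in s); rewrite !expr0n /= !addr0 ?add0r.
Qed.

Lemma supp_l2 (v : vec R X) y : (forall w, w != y -> v w = 0) ->
  in_l2 v /\ l2nsq v = sqmod (v y).
Proof.
move=> hv.
have hs : forall s, uniq s -> sumsq v s <= sqmod (v y).
  by move=> s us; rewrite (supp_sum hv us); case: ifP => _ //; exact: sqmod_ge0.
have l2 : in_l2 v by exists (sqmod (v y)); exact: hs.
split => //; apply/eqP; rewrite eq_le l2nsq_le //=.
have := @l2nsq_ub v [:: y] l2 isT.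
by rewrite (supp_sum hv) // mem_seq1 eqxx.
Qed.

Lemma sqmodM (a b : C) : sqmod (a * b) = sqmod a * sqmod b.
Proof. case: a => a1 a2; case: b => b1 b2; rewrite /sqmod /=. ring. Qed.

Lemma mult_l2 (q : X -> C) (B : R) (xi : vec R X) : 0 <= B -> (forall x, sqmod (q x) <= B) ->
  in_l2 xi -> in_l2 (fun x => q x * xi x) /\
  l2nsq (fun x => q x * xi x) <= B * l2nsq xi.
Proof.
move=> B0 hq l2.
have hs : forall s, uniq s -> sumsq (fun x => q x * xi x) s <= B * l2nsq xi.
  move=> s us; apply: le_trans (_ : B * sumsq xi s <= _); last first.
    by apply: ler_wpM2l => //; apply: l2nsq_ub.
  rewrite /sumsq big_distrr /=; apply: ler_sum => x _.
  by rewrite sqmodM ler_wpM2r ?sqmod_ge0.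
split; first by exists (B * l2nsq xi).
exact: l2nsq_le.
Qed.

Lemma sqmod_eq0 (c : C) : sqmod c = 0 -> c = 0.
Proof.
case: c => a b; rewrite /sqmod /= => h.
have ha : a = 0 by nra.
have hb : b = 0 by nra.
by rewrite ha hb.
Qed.

Lemma expi_sqmod (a : R) : sqmod (expi a) = 1.
Proof. by rewrite /sqmod /expi /= cos2Dsin2. Qed.

Lemma expi_neq0 (a : R) : expi a != 0.
Proof. apply/eqP => h; have := expi_sqmod a; rewrite h /sqmod /= expr0n /= addr0 => /eqP; rewrite eq_sym oner_eq0. by []. Qed.

Lemma expiD (a b : R) : expi a * expi b = expi (a + b).
Proof. rewrite /expi /= sinD cosD. apply/eqP; rewrite eq_complex /=. apply/andP; split; apply/eqP; ring. Qed.

Lemma expi0 : expi 0 = 1 :> C.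
Proof. by rewrite /expi cos0 sin0. Qed.

Lemma expipi : expi pi = -1 :> C.
Proof. by rewrite /expi cospi sinpi; apply/eqP; rewrite eq_complex /= oppr0 !eqxx. Qed.

Definition delta (y : X) : vec R X := fun w => if w == y then 1 else 0.

Lemma delta_supp y : forall w, w != y -> delta y w = 0.
Proof. by move=> w /negbTE; rewrite /delta => ->. Qed.

Lemma delta_l2 y : in_l2 (delta y) /\ l2nsq (delta y) = 1.
Proof.
have [h1 h2] := supp_l2 (delta_supp (y:=y)); split => //.
by rewrite h2 /delta eqxx /sqmod /= expr0n /= addr0 expr1n.
Qed.

Definition ptr (z y : X) : X -> option X := fun w => if w == z then Some y else None.

Lemma vop_ptr z y (xi : vec R X) w : vop (ptr z y) xi w = if w == y then xi z else 0.
Proof.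
rewrite /vop; case: pselect => [e|ne].
  case: (cid e) => x /=; rewrite /ptr; case: eqP => [->|] //.
  by case=> <-; rewrite eqxx.
case: eqP => // wy; exfalso; apply: ne; exists z; by rewrite /ptr eqxx wy.
Qed.

Lemma zero_diff (T S : op R X) e : 0 < e -> (forall xi, in_l2 xi -> T xi = S xi) ->
  opdist_le T S e.
Proof.
move=> e0 hTS xi l2.
have -> : (fun x => T xi x - S xi x) = (fun x => 0 * xi x).
  by apply: funext => x; rewrite hTS // subrr mul0r.
have hq : forall x : X, sqmod (0 : C) <= 0 by move=> x; rewrite /sqmod /= expr0n /= addr0.
have [l2' hb] := @mult_l2 (fun _ => 0) 0 xi (lexx 0) hq l2.
split => //; apply: le_trans hb _; rewrite mul0r mulr_ge0 ?l2nsq_ge0 //.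
by rewrite sqr_ge0.
Qed.

Lemma ptr_CuX (d : X -> X -> R) z y : in_CuX d (vop (ptr z y)).
Proof.
move=> e e0; exists [:: (1, ptr z y)]; split.
  move=> i; rewrite /= ltnS leqn0 => /eqP -> /=; split.
    by move=> x1 x2 y'; rewrite /ptr; case: eqP => // -> _; case: eqP.
  by exists (d z y) => x y'; rewrite /ptr; case: eqP => // -> [<-].
apply: zero_diff => // xi _; apply: funext => w.
by rewrite /comb big_seq1 /= mul1r.
Qed.

Lemma cocycle_close (d : X -> X -> R) (h k : X -> R) :
  cocycle_perturbation d (preflow h) (preflow k) -> close_maps h k.
Proof.
case=> u [[hU hcont hcoc] hpert].
pose U t y := u t (delta y).
have lin : forall t (c : C) y, u t (fun x => c * delta y x) = fun x => c * U t y x.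
  move=> t c y; have := (hU t).2.2.2 c 0 (delta y) (delta y) (delta_l2 y).1 (delta_l2 y).1.
  have -> : (fun x => c * delta y x + 0 * delta y x) = (fun x => c * delta y x).
    by apply: funext => x; rewrite mul0r addr0.
  move=> ->; apply: funext => x; by rewrite mul0r addr0.
have key : forall t y z w, expi (t * k w) * (if w == y then expi (- t * k z) * U t z z else 0)
    = (expi (t * h y) * expi (- t * h z)) * U t y w.
  move=> t y z w.
  have Hf : preflow h t (vop (ptr z y)) (delta z) =
      (fun x => (expi (t * h y) * expi (- t * h z)) * delta y x).
    apply: funext => x; rewrite /preflow /phase vop_ptr /delta eqxx.
    by case: eqP => [->|_]; rewrite ?mulr1 ?mulr0.
  have := hpert t (vop (ptr z y)) (ptr_CuX d z y) (delta z) (delta_l2 z).1.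
  move=> /= /(congr1 (fun f => f w)); rewrite Hf lin.
  by rewrite /preflow /phase vop_ptr.
have offd : forall t y w, w != y -> U t y w = 0.
  move=> t y w wy; have := key t y y w; rewrite (negbTE wy) mulr0 => /esym /eqP.
  by rewrite mulf_eq0 mulf_eq0 !(negbTE (expi_neq0 _)) /= => /eqP.
have diag : forall t y, sqmod (U t y y) = 1.
  move=> t y; have [_ <-] := supp_l2 (offd t y).
  by rewrite ((hU t).2.1 _ (delta_l2 y).1).2 (delta_l2 y).2.
have rel : forall t y z, expi (t * k y) * (expi (- t * k z) * U t z z)
    = (expi (t * h y) * expi (- t * h z)) * U t y y.
  by move=> t y z; have := key t y z y; rewrite eqxx.
have rel0 : forall y z, U 0 z z = U 0 y y.
  by move=> y z; have := rel 0 y z; rewrite !mul0r oppr0 !mul0r expi0 !mul1r.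
have [del del0 Hdel] := hcont 0 (1/2) ltac:(lra).
have cont : forall s y, `|s| < del -> sqmod (U s y y - U 0 y y) <= 1/4.
  move=> s y sd; have := Hdel s _ (delta y) (delta_l2 y).1.
  rewrite subr0 => /(_ sd) [_].
  have hsupp : forall w, w != y -> u s (delta y) w - u 0 (delta y) w = 0.
    by move=> w wy; rewrite -/(U s y w) -/(U 0 y w) !offd // subrr.
  rewrite (supp_l2 hsupp).2 (delta_l2 y).2 mulr1.
  by rewrite /U; lra.
case: (pselect (exists z : X, True)) => [[z0 _]|nX]; last first.
  by exists 0 => x; exfalso; apply: nX; exists x.
have pd : 0 < pi / del by rewrite divr_gt0 // pi_gt0.
have bnd : forall y, `|(k y - h y) - (k z0 - h z0)| <= pi / del.
  move=> y; rewrite leNgt; apply/negP => hn.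
  move: hn; set n := (k y - h y) - (k z0 - h z0) => hn.
  have n0 : n != 0 by apply/eqP => n0; move: hn; rewrite n0 normr0; lra.
  pose s := pi / n.
  have sn : s * n = pi by rewrite /s divfK.
  have sd : `|s| < del.
    have np : 0 < `|n| by rewrite normr_gt0.
    rewrite -(ltr_pM2r np) -normrM sn ger0_norm ?pi_ge0 //.
    by move: hn; rewrite ltr_pdivrMr // mulrC.
  have E : expi (s * k y) * expi (- s * k z0) = - (expi (s * h y) * expi (- s * h z0)).
    rewrite !expiD -[RHS]mulrN1 -expipi expiD; congr expi.
    by rewrite -sn /n; ring.
  have rs := rel s y z0; rewrite mulrA E mulNr in rs.
  have Fnz : expi (s * h y) * expi (- s * h z0) != 0 by rewrite mulf_neq0 // expi_neq0.
  have BA : U s y y = - U s z0 z0.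
    by apply: (mulfI Fnz); rewrite -rs mulrN.
  have c1 := cont s y sd; have c2 := cont s z0 sd; have dd := diag s z0.
  move: c1 c2 dd; rewrite BA -(rel0 y z0).
  case: (U s z0 z0) => a1 a2; case: (U 0 z0 z0) => b1 b2; rewrite /sqmod /= => c1 c2 dd.
  nra.
exists (pi / del + `|h z0 - k z0|) => y.
move: (bnd y); rewrite !ler_norml => /andP[b1 b2].
have := ler_norm (h z0 - k z0); have := ler_norm (-(h z0 - k z0)); rewrite normrN => t1 t2.
apply/andP; split; lra.
Qed.
Definition pid (P : X -> bool) : X -> option X := fun x => if P x then Some x else None.

Lemma vop_pid P (xi : vec R X) w : vop (pid P) xi w = if P w then xi w else 0.
Proof.
rewrite /vop; case: pselect => [e|ne].
  case: (cid e) => x /=; rewrite /pid; case: ifP => // Px [<-].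
  by rewrite Px.
case: ifP => // Pw; exfalso; apply: ne; exists w; by rewrite /pid Pw.
Qed.

Lemma pid_pt (d : X -> X -> R) (hd : is_metric d) P : partial_translation d (pid P).
Proof.
case: hd => _ H2 _ _; split.
  by move=> x1 x2 y; rewrite /pid; case: ifP => // _ [->]; case: ifP => // _ [->].
exists 0 => x y; rewrite /pid; case: ifP => // _ [<-].
by rewrite (proj2 (H2 x x)).
Qed.

Definition intL (N : nat) : seq int := [seq (i%:Z - N%:Z) | i <- iota 0 N.*2.+1].

Lemma intL_uniq N : uniq (intL N).
Proof.
rewrite map_inj_uniq ?iota_uniq // => i j /eqP; rewrite -subr_eq0 opprB addrA subrK subr_eq0.
by move/eqP => [].
Qed.

Lemma intL_mem N (j : int) : - (N%:Z) <= j <= N%:Z -> j \in intL N.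
Proof.
move=> hj; apply/mapP; exists (absz (j + N%:Z)%R); last by lia.
rewrite mem_iota /=; lia.
Qed.

Definition fl (N : nat) (r : R) : int := Num.floor (r * N%:R).

Lemma fl_mem N r : -1 <= r <= 1 -> fl N r \in intL N.
Proof.
move=> /andP[r1 r2]; apply: intL_mem.
have N0 : 0 <= (N%:R : R) by [].
have h1 := floor_le (r * N%:R); have h2 := floorD1_gt (r * N%:R).
rewrite -/(fl N r) in h1 h2.
apply/andP; split.
  have : ((- (N%:Z)) %:~R : R) < (fl N r + 1)%:~R.
    by rewrite mulrNz /=; apply: le_lt_trans h2; nra.
  by rewrite ltr_int; lia.
have : ((fl N r)%:~R : R) <= (N%:Z)%:~R by rewrite /=; apply: (le_trans h1); nra.
by rewrite ler_int.
Qed.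

Lemma fl_err N r : ((r * N%:R - (fl N r)%:~R) ^+ 2 <= 1) /\ 0 <= r * N%:R - (fl N r)%:~R.
Proof.
have h1 := floor_le (r * N%:R); have h2 := floorD1_gt (r * N%:R).
rewrite -/(fl N r) intrD in h1 h2; split; nra.
Qed.

Lemma sum_pick (F : int -> C) (v : C) (L : seq int) j0 : uniq L -> j0 \in L ->
  \sum_(j <- L) F j * (if j0 == j then v else 0) = F j0 * v.
Proof.
elim: L => [|a L IH] //= /andP[aL uL]; rewrite in_cons big_cons.
case: (eqVneq j0 a) => [ej|ne] /=.
  subst a.
  rewrite big1_seq ?addr0 // => j /andP[_ jL].
  case: eqVneq => [ej|_]; last by rewrite mulr0.
  by move: aL; rewrite ej jL.
by move=> jL; rewrite IH // mulr0 add0r.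
Qed.

Local Open Scope complex_scope.
Lemma mult_CuX (d : X -> X -> R) (hd : is_metric d) (g : X -> C) :
  (forall x, -1 <= complex.Re (g x) <= 1 /\ -1 <= complex.Im (g x) <= 1) ->
  in_CuX d (fun xi x => g x * xi x).
Proof.
move=> hg e e0.
pose N := (Num.truncn (2 / e)).+1.
have hN : 2 / e < N%:R := truncnS_gt _.
have Ne : 2 < N%:R * e by rewrite -ltr_pdivrMr.
have N0 : 0 < (N%:R : R) by rewrite ltr0n.
pose ap (r : R) := ((fl N r)%:~R / N%:R : R).
have uL := intL_uniq N.
have mL : forall r, -1 <= r <= 1 -> fl N r \in intL N := @fl_mem N.
move: (intL N) uL mL => L uL mL.
pose sR := [seq ((j%:~R / N%:R : R)%:C, pid (fun x => fl N (complex.Re (g x)) == j)) | j <- L].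
pose sI := [seq ('i * (j%:~R / N%:R : R)%:C, pid (fun x => fl N (complex.Im (g x)) == j)) | j <- L].
exists (sR ++ sI); split.
  move=> i /(mem_nth (0, fun _ => None)); rewrite mem_cat => /orP[] /mapP[j _ ->] /=; exact: pid_pt.
move=> xi l2.
have Ecomb : forall w, comb (sR ++ sI) xi w =
    ((ap (complex.Re (g w)))%:C + 'i * (ap (complex.Im (g w)))%:C) * xi w.
  move=> w; rewrite /comb big_cat !big_map.
  under eq_bigr do rewrite vop_pid.
  under [X in _ + X = _]eq_bigr do rewrite vop_pid.
  have [h1 h2] := hg w.
  rewrite !sum_pick ?mL //.
  by rewrite /= mulrDl.
have -> : (fun x => g x * xi x - comb (sR ++ sI) xi x) =
    (fun x => (g x - ((ap (complex.Re (g x)))%:C + 'i * (ap (complex.Im (g x)))%:C)) * xi x).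
  by apply: funext => x; rewrite Ecomb mulrBl.
apply: mult_l2 => //; first by rewrite sqr_ge0.
move=> x; have [h1 h2] := hg x; case: (g x) h1 h2 => a b /= h1 h2.
have [ea1 ea2] := fl_err N a; have [eb1 eb2] := fl_err N b.
have Na : (a - ap a) * N%:R = a * N%:R - (fl N a)%:~R by rewrite /ap; field; lra.
have Nb : (b - ap b) * N%:R = b * N%:R - (fl N b)%:~R by rewrite /ap; field; lra.
rewrite /sqmod /=.
have -> : a - (ap a + (0 * ap b - 1 * 0)) = a - ap a by ring.
have -> : b - (0 + (0 * 0 + 1 * ap b)) = b - ap b by ring.
have H : ((a - ap a) ^+ 2 + (b - ap b) ^+ 2) * N%:R ^+ 2 <= e ^+ 2 * N%:R ^+ 2.
  have -> : ((a - ap a) ^+ 2 + (b - ap b) ^+ 2) * N%:R ^+ 2 =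
     ((a - ap a) * N%:R) ^+ 2 + ((b - ap b) * N%:R) ^+ 2 by ring.
  rewrite Na Nb; nra.
by rewrite ler_pM2r ?exprn_gt0 in H.
Qed.


Lemma quot_bound (t mm : R) : t != 0 ->
  sqmod ((t^-1)%:C * (expi (t * mm) - 1) - 'i * mm%:C) <= t ^+ 2 * mm ^+ 4 / 2.
Proof.
move=> t0; rewrite /sqmod /expi /=.
have hc := cos_bound (t * mm); have hs := sin_bound (t * mm).
move: hc hs; set c := cos (t * mm); set s := sin (t * mm) => hc hs.
rewrite ler_norml in hs.
have E : (t^-1 * (c - 1) - 0 * (s - 0) - (0 * mm - 1 * 0)) ^+ 2 +
  (t^-1 * (s - 0) + 0 * (c - 1) - (0 * 0 + 1 * mm)) ^+ 2 =
  t^-1 ^+ 2 * ((c - 1) ^+ 2 + (t * mm - s) ^+ 2) by field.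
rewrite E.
have B : (c - 1) ^+ 2 + (t * mm - s) ^+ 2 <= 2 * ((t * mm) ^+ 2 / 2) ^+ 2.
  move: hc hs => /andP[hc1 hc2] /andP[hs1 hs2].
  have q0 : 0 <= (t * mm) ^+ 2 / 2 by rewrite divr_ge0 // sqr_ge0.
  nra.
apply: le_trans (ler_wpM2l (sqr_ge0 _) B) _.
by rewrite le_eqVlt; apply/orP; left; apply/eqP; field.
Qed.

Lemma expi_lip (a b : R) : sqmod (expi a - expi b) <= (a - b) ^+ 2.
Proof.
rewrite /sqmod /expi /=.
have hc := cos_bound (a - b); rewrite cosB in hc.
have h1 := cos2Dsin2 a; have h2 := cos2Dsin2 b.
move: hc => /andP[_ hc].
have E : (cos a - cos b) ^+ 2 + (sin a - sin b) ^+ 2 =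
  (cos a ^+ 2 + sin a ^+ 2) + (cos b ^+ 2 + sin b ^+ 2) - 2 * (cos a * cos b + sin a * sin b).
  by ring.
rewrite E h1 h2; lra.
Qed.

Lemma sumsq_phase (g : X -> R) t (xi : vec R X) s : sumsq (phase g t xi) s = sumsq xi s.
Proof. by apply: eq_bigr => x _; rewrite sqmodM expi_sqmod mul1r. Qed.

Lemma phase_l2 (g : X -> R) t (xi : vec R X) : in_l2 xi ->
  in_l2 (phase g t xi) /\ l2nsq (phase g t xi) = l2nsq xi.
Proof.
move=> l2; have l2' : in_l2 (phase g t xi).
  by case: l2 => M hM; exists M => s us; have := hM s us; rewrite -/(sumsq _ _) -(sumsq_phase g t).
split => //; apply/eqP; rewrite eq_le; apply/andP; split; apply: l2nsq_le => s us.
  by rewrite sumsq_phase; apply: l2nsq_ub.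
by rewrite -(sumsq_phase g t); apply: l2nsq_ub.
Qed.

Lemma phase_unitary (g : X -> R) t : unitary_op (phase g t).
Proof.
split; first exact: phase_l2.
split.
  move=> eta l2; exists (phase g (- t) eta); split; first exact: (phase_l2 _ _ l2).1.
  apply: funext => x; rewrite /phase mulrA expiD mulNr subrr expi0 mul1r //.
by move=> a b xi eta _ _; apply: funext => x; rewrite /phase; ring.
Qed.
Lemma close_inner (d : X -> X -> R) (hd : is_metric d) (h k : X -> R) :
  close_maps h k -> inner_perturbation d (preflow h) (preflow k).
Proof.
case=> M hM.
pose m x := k x - h x.
pose K := `|M| + 1.
have K0 : 0 < K by rewrite /K; have := normr_ge0 M; lra.
have hm : forall x, m x ^+ 2 <= K ^+ 2.
  move=> x; have := hM x; rewrite ler_norml => /andP[a1 a2].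
  have := ler_norm M; rewrite /m /K; nra.
exists (phase m); split; first split.
- move=> t; split; last exact: phase_unitary.
  apply: (@mult_CuX d hd (fun x => expi (t * m x))) => x /=.
  by rewrite cos_geN1 cos_le1 sin_geN1 sin_le1.
- move=> t e e0; exists (e / K); first by rewrite divr_gt0.
  move=> s st xi l2.
  have -> : (fun x => phase m s xi x - phase m t xi x) =
      (fun x => (expi (s * m x) - expi (t * m x)) * xi x).
    by apply: funext => x; rewrite /phase mulrBl.
  apply: mult_l2 => //; first by rewrite sqr_ge0.
  move=> x; apply: le_trans (expi_lip _ _) _.
  have -> : s * m x - t * m x = (s - t) * m x by ring.
  have hst : (s - t) ^+ 2 <= (e / K) ^+ 2.
    by rewrite -real_normK ?num_real // ler_pXn2r ?nnegrE ?normr_ge0 ?divr_ge0 ?ltW.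
  have EK : e / K * K = e by rewrite divfK // gt_eqF.
  have := hm x; have := sqr_ge0 (m x); have := sqr_ge0 (s - t).
  rewrite exprMn; nra.
- move=> t s xi l2; apply: funext => x; rewrite /preflow /phase.
  rewrite !mulrA !expiD; congr (expi _ * _); rewrite /m; ring.
- exists (fun xi x => ('i * (m x)%:C)%C * xi x).
    exists K => xi l2; rewrite /opzero.
    have -> : (fun x => ('i * (m x)%:C)%C * xi x - 0) = (fun x => ('i * (m x)%:C)%C * xi x).
      by apply: funext => x; rewrite subr0.
    apply: mult_l2 => //; first by rewrite sqr_ge0.
    move=> x; rewrite /sqmod /=.
    have -> : (0 * m x - 1 * 0) ^+ 2 + (0 * 0 + 1 * m x) ^+ 2 = m x ^+ 2 by ring.
    exact: hm.
  move=> e e0; exists (e / K ^+ 2); first by rewrite divr_gt0 // exprn_gt0.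
  move=> t t0 tlt xi l2.
  have -> : (fun x => (t^-1)%:C%C * (phase m t xi x - phase m 0 xi x) - ('i * (m x)%:C)%C * xi x)
      = (fun x => ((t^-1)%:C%C * (expi (t * m x) - 1) - ('i * (m x)%:C)%C) * xi x).
    by apply: funext => x; rewrite /phase mul0r expi0 mul1r; ring.
  apply: mult_l2 => //; first by rewrite sqr_ge0.
  move=> x; apply: le_trans (quot_bound _ t0) _.
  have ht : `|t| * K ^+ 2 < e by rewrite -ltr_pdivlMr // exprn_gt0.
  have hx := hm x.
  have ac : `|t| * m x ^+ 2 <= `|t| * K ^+ 2 := ler_wpM2l (normr_ge0 t) hx.
  have ac0 : 0 <= `|t| * m x ^+ 2 by rewrite mulr_ge0 ?normr_ge0 ?sqr_ge0.
  have t2 : t ^+ 2 = `|t| ^+ 2 by rewrite real_normK ?num_real.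
  have E : t ^+ 2 * m x ^+ 4 / 2 = (`|t| * m x ^+ 2) ^+ 2 / 2.
    by rewrite t2 exprMn -exprM.
  rewrite E; move: ac ac0 ht; set p := `|t| * m x ^+ 2; set q := `|t| * K ^+ 2 => ac ac0 ht.
  nra.
move=> t a _ xi l2 /=; rewrite /preflow.
have -> : phase k (- t) (phase m t xi) = phase h (- t) xi.
  by apply: funext => x; rewrite /phase mulrA expiD; congr (expi _ * _); rewrite /m; ring.
by apply: funext => x; rewrite /phase mulrA expiD; congr (expi _ * _); rewrite /m; ring.
Qed.

Lemma close_sym (h k : X -> R) : close_maps h k -> close_maps k h.
Proof. by case=> M hM; exists M => x; rewrite distrC. Qed.
End S.

Unset Implicit Arguments.

Theorem theorem1p4p4 (R : realType) (X : choiceType) (d : X -> X -> R)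
  (hd : is_metric d) (hulf : unif_loc_finite d) (h k : X -> R) :
  (close_maps h k <->
     inner_perturbation d (preflow h) (preflow k) /\
     inner_perturbation d (preflow k) (preflow h)) /\
  (close_maps h k <->
     cocycle_perturbation d (preflow h) (preflow k) /\
     cocycle_perturbation d (preflow k) (preflow h)).
Proof.
have inner_co : forall sg rh, inner_perturbation d sg rh -> cocycle_perturbation d sg rh.
  by move=> sg rh [u [c _ p]]; exists u.
split; split.
- move=> hc; split; first exact: close_inner.
  by apply: close_inner => //; apply: close_sym.
- by case=> /inner_co /cocycle_close.
- move=> hc; split; apply: inner_co; first exact: close_inner.
  by apply: close_inner => //; apply: close_sym.
- by case=> /cocycle_close.
Qed.
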